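(* Over a field of characteristic $0$: the identity $[x_1,x_3\circ x_2]\circ x_4+([x_3,x_1]\circ x_2)\circ x_4=[x_1,(x_3\circ x_4)\circ x_2]+[x_3\circ x_4,x_1]\circ x_2$ ( * ) holds in every differential Poisson algebra $(V,\cdot,\{\cdot,\cdot\},d)$ with respect to $[u,v]=\{u,v\}$ and $u\circ v=u\,d(v)$ (hence on all special GD-algebras), but there exists a GD-algebra on which ( * ) does not hold.
   Context: A differential Poisson algebra is a Poisson algebra (associative commutative product, Lie bracket $\{\cdot,\cdot\}$, Leibniz rule $\{x,yz\}=\{x,y\}z+y\{x,z\}$) with a linear map $d$ which is a derivation of both operations. A GD-algebra is a system $(A,\circ,[\cdot,\cdot])$ such that $(a\circ b)\circ c-a\circ(b\circ c)=(b\circ a)\circ c-b\circ(a\circ c)$, $(a\circ b)\circ c=(a\circ c)\circ b$, $(A,[\cdot,\cdot])$ is a Lie algebra, and $[a,b\circ c]-[c,b\circ a]+[b,a]\circ c-[b,c]\circ a-b\circ[a,c]=0$. *)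

(* Defs.v *)
From HB Require Import structures.
From mathcomp Require Import all_boot all_order all_algebra.
Set Implicit Arguments. Unset Strict Implicit. Unset Printing Implicit Defensive.
Import GRing.Theory.
Local Open Scope ring_scope.

Section Defs.
Variables (K : fieldType) (V : lmodType K).

Definition is_linear_map (d : V -> V) : Prop :=
  forall (a : K) (x y : V), d (a *: x + y) = a *: d x + d y.

Definition is_bilinear (f : V -> V -> V) : Prop :=
  forall (a : K) (x y z : V),
    f (a *: x + y) z = a *: f x z + f y z /\
    f z (a *: x + y) = a *: f z x + f z y.

Definition is_lie_bracket (br : V -> V -> V) : Prop :=
  [/\ is_bilinear br,
      (forall x, br x x = 0) &
      (forall x y z, br x (br y z) + br y (br z x) + br z (br x y) = 0)].

Definition is_diff_poisson (mul br : V -> V -> V) (d : V -> V) : Prop :=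
  is_bilinear mul /\
  (forall x y z, mul (mul x y) z = mul x (mul y z)) /\
  (forall x y, mul x y = mul y x) /\
  is_lie_bracket br /\
  (forall x y z, br x (mul y z) = mul (br x y) z + mul y (br x z)) /\
  is_linear_map d /\
  (forall x y, d (mul x y) = mul (d x) y + mul x (d y)) /\
  (forall x y, d (br x y) = br (d x) y + br x (d y)).

Definition is_GD (circ br : V -> V -> V) : Prop :=
  [/\ is_bilinear circ,
      (forall a b c, circ (circ a b) c - circ a (circ b c)
                     = circ (circ b a) c - circ b (circ a c)),
      (forall a b c, circ (circ a b) c = circ (circ a c) b),
      is_lie_bracket br &
      (forall a b c, br a (circ b c) - br c (circ b a) + circ (br b a) c
                     - circ (br b c) a - circ b (br a c) = 0)].

Definition identity_star (circ br : V -> V -> V) : Prop :=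
  forall x1 x2 x3 x4 : V,
    circ (br x1 (circ x3 x2)) x4 + circ (circ (br x3 x1) x2) x4
    = br x1 (circ (circ x3 x4) x2) + circ (br (circ x3 x4) x1) x2.

End Defs.

(* Main.v *)
Require Import Defs.
From HB Require Import structures.
From mathcomp Require Import all_boot all_order all_algebra.
From mathcomp Require Import ring.
Set Implicit Arguments. Unset Strict Implicit. Unset Printing Implicit Defensive.
Import GRing.Theory.
Local Open Scope ring_scope.

Section Bil.
Variables (K : fieldType) (V : lmodType K) (f : V -> V -> V).
Hypothesis hf : is_bilinear f.
Lemma bil_addl x y z : f (x + y) z = f x z + f y z.
Proof. by have := (hf 1 x y z).1; rewrite !scale1r. Qed.
Lemma bil_addr x y z : f z (x + y) = f z x + f z y.
Proof. by have := (hf 1 x y z).2; rewrite !scale1r. Qed.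
Lemma bil_0l z : f 0 z = 0.
Proof. by have /eqP := bil_addl 0 0 z; rewrite addr0 -subr_eq addrN eq_sym => /eqP. Qed.
Lemma bil_oppl x z : f (- x) z = - f x z.
Proof. by have := (hf (-1) x 0 z).1; rewrite addr0 bil_0l addr0 !scaleN1r. Qed.
End Bil.

Lemma part1 (K : fieldType) (V : lmodType K) (mul br : V -> V -> V) (d : V -> V) :
      is_diff_poisson mul br d ->
      identity_star (fun u v => mul u (d v)) br.
Proof.
move=> [Hmb [Hass [Hcom [[Hbb Halt Hjac] [Hleib _]]]]] x1 x2 x3 x4 /=.
have anti x y : br y x = - br x y.
  apply/eqP; rewrite -addr_eq0; apply/eqP.
  have := Halt (x + y); rewrite !(bil_addl Hbb) !(bil_addr Hbb) !Halt add0r addr0.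
  by rewrite addrC.
move: (d x2) (d x4) => D2 D4.
rewrite (anti x1 x3) (anti x1 (mul x3 D4)) !Hleib !(bil_oppl Hmb) !(bil_addl Hmb) ?(bil_oppl Hmb).
have -> : mul (mul x3 (br x1 D2)) D4 = mul (mul x3 D4) (br x1 D2).
  by rewrite !Hass (Hcom D4).
rewrite opprD.
set A := mul (mul (br x1 x3) D2) D4.
set B := mul (mul x3 D4) (br x1 D2).
set C := mul (mul (br x1 x3) D4) D2.
set E := mul (mul x3 (br x1 D4)) D2.
by rewrite addrAC subrr add0r -opprD addrAC subrr add0r.
Qed.

Section Ex.
Variable K : fieldType.
Notation V := 'rV[K]_3.
Definition i0 : 'I_3 := @Ordinal 3 0 isT.
Definition i1 : 'I_3 := @Ordinal 3 1 isT.
Definition i2 : 'I_3 := @Ordinal 3 2 isT.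
Definition j0 : 'I_1 := @Ordinal 1 0 isT.
Definition cc (u v : V) : V := \row_(i < 3)
  (if (i : nat) == 0%N then u j0 i0 * v j0 i0
   else if (i : nat) == 1%N then u j0 i1 * v j0 i0 else 0).
Definition bb (u v : V) : V := \row_(i < 3)
  (if (i : nat) == 1%N then u j0 i0 * v j0 i2 - u j0 i2 * v j0 i0 else 0).

Ltac crunch := apply/rowP; case => [[|[|[|?]]] ?]; rewrite !mxE /= ?mxE /=; ring.

Lemma ex_GD : is_GD cc bb.
Proof.
split.
- move=> a x y z; split; crunch.
- move=> a b c; crunch.
- move=> a b c; crunch.
- split.
  + move=> a x y z; split; crunch.
  + move=> x; crunch.
  + move=> x y z; crunch.
- move=> a b c; crunch.
Qed.

Definition e (k : 'I_3) : V := delta_mx j0 k.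

Lemma ex_not : ~ identity_star cc bb.
Proof.
move=> /(_ (e i0) (e i0) (e i2) (e i0)) /(congr1 (fun v : V => v j0 i1)).
rewrite /cc /bb /e !mxE /=.
rewrite !(mul0r, mulr0, mul1r, mulr1, subr0, sub0r, add0r, addr0) => /eqP.
by rewrite oppr0 sub0r oppr_eq0 oner_eq0.
Qed.
End Ex.

Theorem mainTheorem19 (K : fieldType) (hK : [pchar K] =i pred0) :
  (forall (V : lmodType K) (mul br : V -> V -> V) (d : V -> V),
      is_diff_poisson mul br d ->
      identity_star (fun u v => mul u (d v)) br) /\
  (exists (V : lmodType K) (circ br : V -> V -> V),
      is_GD circ br /\ ~ identity_star circ br).
Proof.
split; first exact: part1.
exists 'rV[K]_3, (@cc K), (@bb K); split; [exact: ex_GD | exact: ex_not].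
Qed.
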